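(* Assume $\boldsymbol\Gamma$ is irreducible. Then the largest eigenvalue of $\boldsymbol\Theta-\boldsymbol\Psi$, denoted $-\mu$, is simple and admits a unit eigenvector $\mathbf W=(W_{jl})_{(j,l)\in\mathcal T_N}$ with all components strictly positive. Let $\mathbf S(z)=\exp\big((\boldsymbol\Theta-\boldsymbol\Psi)z\big)\mathbf S(0)$ with $\mathbf S(0)\in[0,\infty)^{\mathcal T_N}\setminus\{0\}$. Then, with $c_W=\sum_{(j,l)\in\mathcal T_N}W_{jl}S_{jl}(0)>0$, $$\mathbf S(z)=c_W\mathbf We^{-\mu z}\big(1+o(1)\big)\quad\text{as }z\to+\infty .$$ In particular, if $S_{jl}(0)=(2-\delta_{jl})q_jq_l$ for some $\mathbf q\in[0,\infty)^N\setminus\{0\}$ (the initial second moments $R_{jl}(0)=q_jq_l$), then $c_W=\sum_{j,l=0}^{N-1}W_{jl}q_jq_l$ (with $W_{jl}:=W_{lj}$ for $j>l$).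
   Context: Let $N\ge 2$. Let $\boldsymbol\Gamma=(\Gamma_{jl})_{j,l=0}^{N-1}$ be a real symmetric matrix with $\Gamma_{jl}\ge 0$ for $j\neq l$ and $\Gamma_{jj}=-\sum_{l\neq j}\Gamma_{jl}$. $\boldsymbol\Gamma$ is called irreducible if the graph on $\{0,\dots,N-1\}$ with an edge between $j\neq l$ whenever $\Gamma_{jl}>0$ is connected. Let $\Lambda_0,\dots,\Lambda_{N-1}\ge 0$. Let $\mathcal T_N=\{(j,l)\in\mathbb N^2:0\le j\le l\le N-1\}$. For $\mathbf S=(S_{jl})_{(j,l)\in\mathcal T_N}$ use the convention that $S_{jl}$ with $j>l$ means $S_{lj}$. Define linear maps on $\mathbb R^{\mathcal T_N}$ by $(\boldsymbol\Psi\mathbf S)_{jl}=(\Lambda_j+\Lambda_l)S_{jl}$ and $$(\boldsymbol\Theta\mathbf S)_{jl}=2\Gamma_{jl}\mathbf 1_{j\neq l}(S_{jj}+S_{ll}-2S_{jl})+\sum_{n\notin\{j,l\}}\big[\Gamma_{ln}(S_{jn}-S_{jl})+\Gamma_{jn}(S_{nl}-S_{jl})\big].$$ The vector $\mathbf S$ encodes second moments $R_{jl}=\mathbb E[P_jP_l]$ of mode powers via $S_{jl}=2R_{jl}$ for $j<l$ and $S_{jj}=R_{jj}$; $\mathbf S$ solves $\partial_z\mathbf S=(\boldsymbol\Theta-\boldsymbol\Psi)\mathbf S$. *)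

(* Defs.v *)
From Stdlib Require Import Reals Lra Lia Arith.
Open Scope R_scope.

(* Vectors indexed by T_N = {(j,l) : 0 <= j <= l <= N-1}; represented as
   functions nat -> nat -> R, only the entries with j <= l < N matter. *)
Definition vec := nat -> nat -> R.

Definition inT (N j l : nat) : Prop := (j <= l < N)%nat.

Fixpoint sumN (n : nat) (f : nat -> R) : R :=
  match n with
  | O => 0
  | Datatypes.S k => sumN k f + f k
  end.

Definition sumT (N : nat) (f : nat -> nat -> R) : R :=
  sumN N (fun l => sumN (l + 1) (fun j => f j l)).

(* convention: S_{jl} with j > l means S_{lj} *)
Definition Sget (S : vec) (j l : nat) : R :=
  if Nat.leb j l then S j l else S l j.

Definition Theta (N : nat) (G : nat -> nat -> R) (S : vec) : vec :=
  fun j l =>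
    2 * G j l * (if Nat.eqb j l then 0 else 1)
      * (Sget S j j + Sget S l l - 2 * Sget S j l)
    + sumN N (fun n =>
        if (Nat.eqb n j || Nat.eqb n l)%bool then 0
        else G l n * (Sget S j n - Sget S j l)
             + G j n * (Sget S n l - Sget S j l)).

Definition Psi (Lam : nat -> R) (S : vec) : vec :=
  fun j l => (Lam j + Lam l) * S j l.

Definition Aop (N : nat) (G : nat -> nat -> R) (Lam : nat -> R) (S : vec) : vec :=
  fun j l => Theta N G S j l - Psi Lam S j l.

Definition eqT (N : nat) (u v : vec) : Prop :=
  forall j l, inT N j l -> u j l = v j l.

Definition dimT (N : nat) : nat := Nat.div (N * (N + 1)) 2.

Fixpoint opow (k : nat) (F : vec -> vec) (v : vec) : vec :=
  match k with
  | O => v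
  | Datatypes.S k' => F (opow k' F v)
  end.

(* a + i b is a (complex) eigenvalue of the real linear map A on R^{T_N}:
   there is a nonzero complex vector u + i v with A(u+iv) = (a+ib)(u+iv). *)
Definition is_eigenvalue (N : nat) (A : vec -> vec) (a b : R) : Prop :=
  exists u v : vec,
    (exists j l, inT N j l /\ (u j l <> 0 \/ v j l <> 0)) /\
    eqT N (A u) (fun j l => a * u j l - b * v j l) /\
    eqT N (A v) (fun j l => b * u j l + a * v j l).

(* lam (real) is an eigenvalue of A with algebraic multiplicity one and
   eigenvector W: the generalized eigenspace ker (A - lam)^{|T_N|} is
   spanned by W. *)
Definition simple_eigen (N : nat) (A : vec -> vec) (lam : R) (W : vec) : Prop :=
  (exists j l, inT N j l /\ W j l <> 0) /\
  eqT N (A W) (fun j l => lam * W j l) /\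
  (forall v : vec,
     eqT N (opow (dimT N) (fun x j l => A x j l - lam * x j l) v) (fun _ _ => 0) ->
     exists c : R, eqT N v (fun j l => c * W j l)).

(* connectivity of the graph with edges {j,l}, j<>l, Gamma_{jl} > 0 *)
Inductive reach (N : nat) (G : nat -> nat -> R) : nat -> nat -> Prop :=
  | reach_refl j : reach N G j j
  | reach_step j k l : (j < N)%nat -> (k < N)%nat -> j <> k -> 0 < G j k ->
      reach N G k l -> reach N G j l.

Definition irreducible (N : nat) (G : nat -> nat -> R) : Prop :=
  forall j l, (j < N)%nat -> (l < N)%nat -> reach N G j l.

Definition kdelta (j l : nat) : R := if Nat.eqb j l then 1 else 0.

(* Main.v *)
Require Import Defs.
From Stdlib Require Import Reals Lra Lia Bool Arith.
From mathcomp Require all_boot all_order all_algebra.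
From mathcomp Require Rstruct ring lra.

Module MX.
Import all_boot all_order all_algebra Rstruct ring lra.
Set Implicit Arguments. Unset Strict Implicit. Unset Printing Implicit Defensive.
Import GRing.Theory Num.Theory Order.TTheory.
Local Open Scope ring_scope.

Definition qf n (M : 'M[R]_n) (x : 'rV[R]_n) : R := (x *m M *m x^T) 0 0.
Definition Kb n (M : 'M[R]_n) : R := \sum_(i < n) \sum_(j < n) `|M i j|.

Lemma qfE n (M : 'M[R]_n) (x : 'rV[R]_n) : qf M x = \sum_(i < n) \sum_(j < n) x 0 i * M i j * x 0 j.
Proof.
rewrite /qf mxE exchange_big /=; apply: eq_bigr => j _.
by rewrite !mxE big_distrl /=.
Qed.

Lemma qf1E n (x : 'rV[R]_n) : qf 1%:M x = \sum_(i < n) x 0 i ^+ 2.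
Proof.
rewrite /qf mulmx1 mxE; apply: eq_bigr => i _; by rewrite !mxE expr2.
Qed.

Lemma sq_le_sum n (x : 'rV[R]_n) i : x 0 i ^+ 2 <= \sum_(k < n) x 0 k ^+ 2.
Proof.
rewrite (bigD1 i) //= lerDl; apply: sumr_ge0 => k _; exact: sqr_ge0.
Qed.

Lemma qf_bound n (M : 'M[R]_n) (x : 'rV[R]_n) : `|qf M x| <= Kb M * qf 1%:M x.
Proof.
rewrite qfE qf1E /Kb big_distrl /=.
apply: (le_trans (ler_norm_sum _ _ _)); apply: ler_sum => i _.
rewrite big_distrl /=.
apply: (le_trans (ler_norm_sum _ _ _)); apply: ler_sum => j _.
set s := \sum_k _.
have hi := sq_le_sum x i; have hj := sq_le_sum x j.
rewrite !normrM.
have key : forall a b t : R, a * a <= t -> b * b <= t -> a * b <= t.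
  move=> a b t ha hb; have := sqr_ge0 (a - b); rewrite expr2 => h; nra.
have h1 : `|x 0 i| * `|x 0 j| <= s.
  apply: key; rewrite -expr2 real_normK ?num_real //.
rewrite mulrAC mulrC; apply: ler_wpM2l => //.
Qed.

Lemma disc_le (a b c : R) : 0 <= c -> (forall t, 0 <= a + 2 * t * b + t ^+ 2 * c) ->
  b ^+ 2 <= a * c.
Proof.
move=> c0 H.
have a0 : 0 <= a.
  have := H 0. rewrite !(mulr0, mul0r, addr0, expr2). by [].
have [ce|cn0] := eqVneq c 0.
  rewrite ce mulr0.
  have [be|bn0] := eqVneq b 0; first by rewrite be expr2 mul0r.
  have := H (- (a + 1) / (2 * b)).
  have -> : 2 * (- (a + 1) / (2 * b)) * b = - (a + 1) by field.
  rewrite ce mulr0 addr0. lra.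
have cp : 0 < c by rewrite lt0r cn0.
have := H (- b / c).
have -> : a + 2 * (- b / c) * b + (- b / c) ^+ 2 * c = a - b ^+ 2 / c.
  by field.
rewrite subr_ge0 ler_pdivrMr //.
Qed.

Definition bf n (M : 'M[R]_n) (u v : 'rV[R]_n) : R := (u *m M *m v^T) 0 0.

Lemma bf_sym n (M : 'M[R]_n) u v : M^T = M -> bf M u v = bf M v u.
Proof.
move=> sM; rewrite /bf.
have E : forall A : 'M[R]_1, A 0 0 = (A^T) 0 0.
  move=> A. by rewrite mxE.
rewrite E.
by rewrite !trmx_mul trmxK sM mulmxA.
Qed.

Lemma qf_expand n (M : 'M[R]_n) y x t : M^T = M ->
  qf M (y + t *: x) = qf M y + 2 * t * bf M y x + t ^+ 2 * qf M x.
Proof.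
move=> sM; rewrite /qf raddfD /= linearZ /= !mulmxDl !mulmxDr.
rewrite -!scalemxAl -!scalemxAr.
have e1 : forall (A B : 'M[R]_1), (A + B) 0 0 = A 0 0 + B 0 0 by move=> A B; rewrite mxE.
have e2 : forall a (A : 'M[R]_1), (a *: A) 0 0 = a * A 0 0 by move=> a A; rewrite mxE.
rewrite !e1 !e2 -/(bf M y x) -/(bf M x y) (bf_sym _ _ sM).
ring.
Qed.

Lemma q1_ge0 n (x : 'rV[R]_n) : 0 <= qf 1%:M x.
Proof. rewrite qf1E; apply: sumr_ge0 => i _; exact: sqr_ge0. Qed.

Lemma q1_eq0 n (x : 'rV[R]_n) : qf 1%:M x = 0 -> x = 0.
Proof.
rewrite qf1E => /eqP; rewrite psumr_eq0 => [/allP H|i _]; last exact: sqr_ge0.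
apply/rowP => i; rewrite mxE; apply/eqP; rewrite -sqrf_eq0.
exact: (H i (mem_index_enum i)).
Qed.

Lemma qf0 n (M : 'M[R]_n) : qf M 0 = 0.
Proof. by rewrite /qf mul0mx mul0mx mxE. Qed.

Lemma qfB n (M : 'M[R]_n) l x : qf (l%:M - M) x = l * qf 1%:M x - qf M x.
Proof.
rewrite /qf mulmxBr mulmxBl mul_mx_scalar -scalemxAl mulmx1.
have e1 : forall (A B : 'M[R]_1), (A - B) 0 0 = A 0 0 - B 0 0 by move=> A B; rewrite !mxE.
have e2 : forall a (A : 'M[R]_1), (a *: A) 0 0 = a * A 0 0 by move=> a A; rewrite mxE.
by rewrite e1 e2.
Qed.

Lemma q1_mul n (x : 'rV[R]_n) (P : 'M[R]_n) : qf 1%:M (x *m P) = qf (P *m P^T) x.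
Proof. by rewrite /qf mulmx1 trmx_mul !mulmxA. Qed.

Lemma Kb_ge0 n (M : 'M[R]_n) : 0 <= Kb M.
Proof. by apply: sumr_ge0 => i _; apply: sumr_ge0 => j _; exact: normr_ge0. Qed.

Lemma max_eig n (M : 'M[R]_n) : (0 < n)%N -> M^T = M ->
  exists (l : R) (v : 'rV[R]_n), v != 0 /\ v *m M = l *: v /\
    (forall x, qf M x <= l * qf 1%:M x).
Proof.
move=> n0 sM.
pose E := fun r : R => exists x : 'rV[R]_n, 0 < qf 1%:M x /\ r = qf M x / qf 1%:M x.
have bE : bound E.
  exists (Kb M) => r [x [hx ->]]; apply/RleP; rewrite ler_pdivrMr //.
  apply: le_trans (qf_bound M x); exact: ler_norm.
have nE : exists r, E r.
  exists (qf M (const_mx 1) / qf 1%:M (const_mx 1 : 'rV[R]_n)), (const_mx 1); split => //.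
  rewrite qf1E (eq_bigr (fun=> 1)) => [|i _]; last by rewrite mxE expr1n.
  by rewrite sumr_const card_ord ltr0n.
case: (completeness E bE nE) => l [ub lub].
have Hub : forall x, qf M x <= l * qf 1%:M x.
  move=> x; have := q1_ge0 x; rewrite le0r => /orP [/eqP h|hx].
    by rewrite (q1_eq0 h) !qf0 mulr0.
  have := ub _ (ex_intro _ x (conj hx erefl)) => /RleP.
  by rewrite ler_pdivrMr // mulrC.
exists l.
have [d0|dn0] := eqVneq (\det (l%:M - M)) 0.
  move/eqP/det0P: d0 => [v vn0 hv]; exists v; split => //; split => //.
  by move: hv; rewrite mulmxBr mul_mx_scalar => /eqP; rewrite subr_eq0 => /eqP <-.
exfalso.
set B := l%:M - M.
have sB : B^T = B by rewrite /B raddfB /= tr_scalar_mx sM.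
have uB : B \in unitmx by rewrite unitmxE unitfE.
set Bi := invmx B.
have QB0 : forall z, 0 <= qf B z by move=> z; rewrite qfB subr_ge0 Hub.
set C1 := `|l| + Kb M.
set K2 := Kb (Bi *m Bi^T).
have C10 : 0 <= C1 by rewrite addr_ge0 ?normr_ge0 ?Kb_ge0.
have K20 : 0 <= K2 by exact: Kb_ge0.
set C := C1 * K2 + 1.
have Cp : 0 < C by rewrite /C; have := mulr_ge0 C10 K20; lra.
have key : forall x, 0 < qf 1%:M x -> qf 1%:M x <= C * qf B x.
  move=> x hx; set y := x *m Bi.
  have yB : y *m B = x by rewrite /y mulmxKV.
  have b_eq : bf B y x = qf 1%:M x by rewrite /bf yB /qf mulmx1.
  have cs : bf B y x ^+ 2 <= qf B y * qf B x.
    apply: disc_le; first exact: QB0.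
    by move=> t; rewrite -qf_expand //; exact: QB0.
  have hy : qf B y <= C1 * qf 1%:M y.
    rewrite qfB /C1; have := qf_bound M y; have := q1_ge0 y.
    have := ler_norm (- qf M y); rewrite normrN.
    have := ler_wpM2r (q1_ge0 y) (ler_norm l).
    lra.
  have hy2 : qf 1%:M y <= K2 * qf 1%:M x.
    rewrite /y q1_mul; apply: le_trans (qf_bound _ x); exact: ler_norm.
  have h1 : qf B y * qf B x <= C1 * qf 1%:M y * qf B x := ler_wpM2r (QB0 x) hy.
  have h2 : C1 * qf 1%:M y <= C1 * (K2 * qf 1%:M x) := ler_wpM2l C10 hy2.
  have h3 := ler_wpM2r (QB0 x) h2.
  have h4 : qf 1%:M x * qf 1%:M x <= qf 1%:M x * (C1 * K2 * qf B x).
    move: cs h1 h3; rewrite b_eq expr2; lra.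
  move: h4; rewrite ler_pM2l // => h4.
  have := QB0 x; rewrite /C; lra.
have ubl : is_upper_bound E (l - 1 / C).
  move=> r [x [hx ->]]; apply/RleP; rewrite ler_pdivrMr //.
  have := key x hx; rewrite qfB => h.
  have h' : qf 1%:M x / C <= l * qf 1%:M x - qf M x by rewrite ler_pdivrMr // mulrC.
  have -> : (l - 1 / C) * qf 1%:M x = l * qf 1%:M x - qf 1%:M x / C by ring.
  lra.
have := lub _ ubl; move/RleP => hl.
have hC : 0 < 1 / C by rewrite divr_gt0.
move: hl; rewrite -subr_ge0; set u := 1 / C in hC *.
have -> : l - u - l = - u by ring.
by rewrite oppr_ge0 leNgt hC.
Qed.


Definition ipT N (u v : vec) : R := sumT N (fun j l => Rmult (u j l) (v j l)).
Definition linT N (M : vec -> vec) : Prop :=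
  (forall u v j l, inT N j l -> M (fun a b => Rplus (u a b) (v a b)) j l = Rplus (M u j l) (M v j l)) /\
  (forall c u j l, inT N j l -> M (fun a b => Rmult c (u a b)) j l = Rmult c (M u j l)) /\
  (forall u v, (forall a b, inT N a b -> u a b = v a b) -> forall j l, inT N j l -> M u j l = M v j l).
Definition symT N (M : vec -> vec) : Prop := forall u v, ipT N u (M v) = ipT N (M u) v.


Lemma sumN_big n f : sumN n f = \sum_(i < n) f i.
Proof. elim: n => [|n IH] /=; first by rewrite big_ord0. by rewrite big_ord_recr /= IH. Qed.

Lemma sumN_iota n f : sumN n f = \sum_(i <- iota 0 n) f i.
Proof. by rewrite sumN_big -(big_mkord xpredT) /index_iota subn0. Qed.

Definition PT N : seq (nat * nat) := [seq (j, l) | l <- iota 0 N, j <- iota 0 l.+1].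

Lemma sumT_P N f : sumT N f = \sum_(p <- PT N) f p.1 p.2.
Proof.
rewrite /sumT sumN_iota /PT big_allpairs_dep /=; apply: eq_bigr => l _.
by rewrite sumN_iota Nat.add_1_r.
Qed.

Lemma memPT N j l : ((j, l) \in PT N) = (j <= l < N)%N.
Proof.
apply/allpairsPdep/idP.
  by move=> [l' [j' [hl hj [-> ->]]]]; move: hl hj; rewrite !mem_iota /= !add0n ltnS => -> ->.
move=> /andP [hj hl]; exists l, j; split => //; rewrite mem_iota /= add0n //.
Qed.

Lemma inT_PT N j l : inT N j l <-> (j, l) \in PT N.
Proof.
rewrite memPT /inT; split.
  by move=> [/ssrnat.leP -> /ssrnat.ltP ->].
by move=> /andP [/ssrnat.leP h1 /ssrnat.ltP h2].
Qed.

Lemma uniq_PT N : uniq (PT N).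
Proof.
apply: allpairs_uniq_dep; first exact: iota_uniq.
  by move=> l _; exact: iota_uniq.
by move=> [x y] [x' y'] _ _ /= [-> ->].
Qed.

Definition ev (p : nat * nat) : vec := fun a b => if (a == p.1) && (b == p.2) then 1 else 0.

Lemma evE p q : ev p q.1 q.2 = if q == p then 1 else 0.
Proof. by case: p q => [a b] [c d]; rewrite /ev /= xpair_eqE. Qed.

Lemma sum_delta (s : seq (nat * nat)) p (g : nat * nat -> R) : uniq s -> p \in s ->
  \sum_(q <- s) (if q == p then g q else 0) = g p.
Proof.
move=> us ps. rewrite (bigD1_seq p) //= eqxx.
rewrite big1_seq ?addr0 //.
by move=> q /andP [/negbTE -> _].
Qed.

Lemma ip_ev_l N p v : p \in PT N -> ipT N (ev p) v = v p.1 p.2.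
Proof.
move=> hp; rewrite /ipT sumT_P -[RHS](sum_delta (fun q => v q.1 q.2) (uniq_PT N) hp).
by apply: eq_bigr => q _; rewrite RmultE evE; case: (q == p); rewrite ?mul1r ?mul0r.
Qed.

Lemma ip_ev_r N p v : p \in PT N -> ipT N v (ev p) = v p.1 p.2.
Proof.
move=> hp; rewrite /ipT sumT_P -[RHS](sum_delta (fun q => v q.1 q.2) (uniq_PT N) hp).
by apply: eq_bigr => q _; rewrite RmultE evE; case: (q == p); rewrite ?mulr1 ?mulr0.
Qed.

Lemma lin_zero N M j l : linT N M -> inT N j l -> M (fun _ _ => 0) j l = 0.
Proof.
move=> [hA [hZ hE]] hjl.
rewrite (hE _ (fun a b => Rmult 0 ((fun _ _ => 0) a b))) //; first by rewrite hZ // RmultE mul0r.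
by move=> a b _ /=; rewrite RmultE mul0r.
Qed.

Lemma lin_sum N M (s : seq (nat * nat)) (c : nat * nat -> R) j l : linT N M -> inT N j l ->
  M (fun a b => \sum_(q <- s) c q * ev q a b) j l = \sum_(q <- s) c q * M (ev q) j l.
Proof.
move=> hM hjl; have [hA [hZ hE]] := hM.
elim: s j l hjl => [|x s IH] j l hjl.
  rewrite big_nil; apply: etrans (lin_zero hM hjl); apply: hE; last exact: hjl.
  by move=> a b _; rewrite big_nil.
rewrite big_cons.
rewrite (hE _ (fun a b => Rplus ((fun a b => Rmult (c x) (ev x a b)) a b)
                ((fun a b => \sum_(q <- s) c q * ev q a b) a b))) //; last first.
  by move=> a b _; rewrite big_cons.
rewrite hA // hZ // IH //.
Qed.

Lemma expand N M x a b : linT N M -> inT N a b ->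
  M x a b = \sum_(q <- PT N) x q.1 q.2 * M (ev q) a b.
Proof.
move=> hM hab; have [hA [hZ hE]] := hM.
rewrite -(lin_sum (PT N) (fun q => x q.1 q.2) hM hab); apply: hE => // c d hcd.
have hp : (c, d) \in PT N by apply/inT_PT.
rewrite -[LHS](sum_delta (fun q => x q.1 q.2) (uniq_PT N) hp).
apply: eq_bigr => q _; rewrite /ev; case: q => [e f] /=.
rewrite xpair_eqE (eq_sym c) (eq_sym d).
by case: ((e == c) && (f == d)); rewrite ?mulr1 ?mulr0.
Qed.

Lemma big_seq_ord (s : seq (nat * nat)) (F : nat * nat -> R) :
  \sum_(q <- s) F q = \sum_(k < size s) F (nth (0%N, 0%N) s k).
Proof. by rewrite (big_nth (0%N, 0%N)) big_mkord. Qed.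

Lemma MAXvec N M : (0 < N)%coq_nat -> linT N M -> symT N M ->
  exists lam y, (exists j l, inT N j l /\ y j l <> R0) /\
    (forall j l, inT N j l -> M y j l = Rmult lam (y j l)) /\
    (forall x, Rle (ipT N x (M x)) (Rmult lam (ipT N x x))).
Proof.
move=> N0 hM hS.
set s := PT N; set n := size s.
pose phi (k : 'I_n) := nth (0%N, 0%N) s k.
have phiP : forall k : 'I_n, phi k \in s by move=> k; apply: mem_nth.
have phiT : forall k : 'I_n, inT N (phi k).1 (phi k).2.
  by move=> k; apply/inT_PT; case: (phi k) (phiP k).
have phi_inj : forall k k' : 'I_n, (phi k == phi k') = (k == k').
  by move=> k k'; rewrite nth_uniq ?uniq_PT.
have n0 : (0 < n)%N.
  have h : (0%N, 0%N) \in s by rewrite memPT; apply/ssrnat.ltP.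
  by rewrite -(index_mem (0%N, 0%N)) in h; apply: leq_ltn_trans h.
pose Mx := \matrix_(k, k') M (ev (phi k')) (phi k).1 (phi k).2 : 'M[R]_n.
have sMx : Mx^T = Mx.
  apply/matrixP => k k'; rewrite !mxE.
  have := hS (ev (phi k')) (ev (phi k)).
  by rewrite ip_ev_l ?phiP // ip_ev_r ?phiP.
have qfx : forall x, ipT N x (M x) = qf Mx (\row_k x (phi k).1 (phi k).2).
  move=> x; rewrite qfE /ipT sumT_P big_seq_ord.
  apply: eq_bigr => k _; rewrite RmultE (expand x hM (phiT k)) big_seq_ord.
  rewrite big_distrr /=; apply: eq_bigr => k' _; rewrite !mxE; ring.
have q1x : forall x, ipT N x x = qf 1%:M (\row_k x (phi k).1 (phi k).2).
  move=> x; rewrite qf1E /ipT sumT_P big_seq_ord.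
  by apply: eq_bigr => k _; rewrite RmultE mxE expr2.
have [lam [v [vn0 [hv Hub]]]] := max_eig n0 sMx.
exists lam.
pose y : vec := fun a b => \sum_(k < n) v 0 k * ev (phi k) a b.
have yat : forall k0, y (phi k0).1 (phi k0).2 = v 0 k0.
  move=> k0; rewrite /y (bigD1 k0) //= big1 => [|k hk].
    by rewrite evE eqxx mulr1 addr0.
  by rewrite evE phi_inj eq_sym (negbTE hk) mulr0.
exists y; split; [|split].
- have [k hk] : exists k, v 0 k != 0.
    apply/existsP; apply: contraR vn0 => /existsPn h.
    by apply/eqP/rowP => k; rewrite mxE; apply/eqP; move/negPn: (h k).
  exists (phi k).1, (phi k).2; split; first exact: phiT.
  by rewrite yat; apply/eqP.
- move=> a b hab.
  have hp : (a, b) \in s by apply/inT_PT.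
  pose k0 := Ordinal (etrans (index_mem (a, b) s) hp).
  have hk0 : phi k0 = (a, b) by rewrite /phi /= nth_index.
  have ya : y a b = v 0 k0 by rewrite -yat hk0.
  rewrite (expand y hM hab) big_seq_ord RmultE ya.
  have := congr1 (fun A : 'M[R]_(1, n) => A 0 k0) hv; rewrite !mxE => <-.
  apply: eq_bigr => k _; rewrite yat.
  have := congr1 (fun A : 'M[R]_n => A k0 k) sMx; rewrite !mxE => ->.
  by rewrite hk0.
- move=> x; rewrite qfx q1x; apply/RleP; exact: Hub.
Qed.

Unset Implicit Arguments. Set Strict Implicit. Set Printing Implicit Defensive.
End MX.
Import MX.
Open Scope R_scope.

Lemma sumN_ext n f g : (forall i, (i < n)%nat -> f i = g i) -> sumN n f = sumN n g.
Proof. induction n as [|n IH]; intros H; simpl; auto. rewrite IH by (intros; apply H; lia). rewrite (H n) by lia. auto. Qed.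

Lemma sumN_lin n f g c d : sumN n (fun i => c * f i + d * g i) = c * sumN n f + d * sumN n g.
Proof. induction n as [|n IH]; simpl; [ring|]. rewrite IH. ring. Qed.

Lemma sumN_0 n : sumN n (fun _ => 0) = 0.
Proof. induction n; simpl; auto. rewrite IHn; ring. Qed.

Lemma sumN_ge0 n f : (forall i, (i < n)%nat -> 0 <= f i) -> 0 <= sumN n f.
Proof. induction n as [|n IH]; intros H; simpl; [lra|]. assert (0 <= f n) by (apply H; lia).
  assert (0 <= sumN n f) by (apply IH; intros; apply H; lia). lra. Qed.

Lemma sumN_le n f g : (forall i, (i < n)%nat -> f i <= g i) -> sumN n f <= sumN n g.
Proof. induction n as [|n IH]; intros H; simpl; [lra|]. assert (f n <= g n) by (apply H; lia).
  assert (sumN n f <= sumN n g) by (apply IH; intros; apply H; lia). lra. Qed.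

Lemma sumN_term n f i : (forall k, (k < n)%nat -> 0 <= f k) -> (i < n)%nat -> f i <= sumN n f.
Proof. induction n as [|n IH]; intros H Hi; simpl; [lia|].
  assert (0 <= f n) by (apply H; lia).
  assert (0 <= sumN n f) by (apply sumN_ge0; intros; apply H; lia).
  destruct (Nat.eq_dec i n) as [->|Hn]; [lra|].
  assert (f i <= sumN n f) by (apply IH; [intros; apply H; lia| lia]). lra. Qed.

Lemma sumT_ext N f g : (forall j l, inT N j l -> f j l = g j l) -> sumT N f = sumT N g.
Proof. intros H; unfold sumT; apply sumN_ext; intros l Hl; apply sumN_ext; intros j Hj.
  apply H; unfold inT; lia. Qed.

Lemma sumT_lin N f g c d : sumT N (fun j l => c * f j l + d * g j l) = c * sumT N f + d * sumT N g.
Proof. unfold sumT. rewrite <- sumN_lin. apply sumN_ext; intros. apply sumN_lin. Qed.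

Lemma sumT_0 N : sumT N (fun _ _ => 0) = 0.
Proof. unfold sumT. transitivity (sumN N (fun _ => 0)); [apply sumN_ext; intros; apply sumN_0 | apply sumN_0]. Qed.

Lemma sumT_ge0 N f : (forall j l, inT N j l -> 0 <= f j l) -> 0 <= sumT N f.
Proof. intros H; unfold sumT; apply sumN_ge0; intros l Hl; apply sumN_ge0; intros j Hj.
  apply H; unfold inT; lia. Qed.

Lemma sumT_le N f g : (forall j l, inT N j l -> f j l <= g j l) -> sumT N f <= sumT N g.
Proof. intros H; unfold sumT; apply sumN_le; intros l Hl; apply sumN_le; intros j Hj.
  apply H; unfold inT; lia. Qed.

Lemma sumT_term N f j l : (forall a b, inT N a b -> 0 <= f a b) -> inT N j l -> f j l <= sumT N f.
Proof. intros H [Hj Hl]. unfold sumT.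
  apply Rle_trans with (sumN (l + 1) (fun j0 => f j0 l)).
  - apply (sumN_term (l+1) (fun j0 => f j0 l)); [intros; apply H; unfold inT; lia| lia].
  - apply (sumN_term N (fun l0 => sumN (l0 + 1) (fun j0 => f j0 l0))); [|lia].
    intros k Hk; apply sumN_ge0; intros; apply H; unfold inT; lia. Qed.

Lemma sumT_eq0 N f : (forall a b, inT N a b -> 0 <= f a b) -> sumT N f = 0 ->
  forall j l, inT N j l -> f j l = 0.
Proof. intros H H0 j l Hjl. pose proof (sumT_term N f j l H Hjl). pose proof (H j l Hjl). lra. Qed.

Lemma sumT_pos N f : (forall a b, inT N a b -> 0 <= f a b) -> (exists j l, inT N j l /\ 0 < f j l) ->
  0 < sumT N f.
Proof. intros H [j [l [Hjl Hp]]]. pose proof (sumT_term N f j l H Hjl). lra. Qed.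


Lemma Rabs_eq_0 x : Rabs x = 0 -> x = 0.
Proof. intros H; destruct (Req_dec x 0) as [e|e]; auto. apply Rabs_no_R0 in e; contradiction. Qed.

Section Abs.
Variable N : nat.
Notation ip := (ipT N).

Lemma ip_sym u v : ip u v = ip v u.
Proof. unfold ipT; apply sumT_ext; intros; ring. Qed.

Lemma ip_ext u u' v v' : eqT N u u' -> eqT N v v' -> ip u v = ip u' v'.
Proof. intros H1 H2; unfold ipT; apply sumT_ext; intros j l H; rewrite H1, H2 by auto; auto. Qed.

Lemma ip_lin_r u v w c d : ip u (fun a b => c * v a b + d * w a b) = c * ip u v + d * ip u w.
Proof. unfold ipT. rewrite <- sumT_lin. apply sumT_ext; intros; ring. Qed.

Lemma ip_lin_l u v w c d : ip (fun a b => c * v a b + d * w a b) u = c * ip v u + d * ip w u.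
Proof. unfold ipT. rewrite <- sumT_lin. apply sumT_ext; intros; ring. Qed.

Lemma nrm_ge0 u : 0 <= ip u u.
Proof. unfold ipT; apply sumT_ge0; intros; nra. Qed.

Lemma nrm_eq0 u : ip u u = 0 -> eqT N u (fun _ _ => 0).
Proof. intros H j l Hjl. assert (u j l * u j l = 0).
  { apply (sumT_eq0 N (fun j l => u j l * u j l)); auto. intros; nra. }
  nra. Qed.

Lemma lin_comb M u v c d j l : linT N M -> inT N j l ->
  M (fun a b => c * u a b + d * v a b) j l = c * M u j l + d * M v j l.
Proof. intros [hA [hZ hE]] H. rewrite (hA (fun a b => c * u a b) (fun a b => d * v a b)) by auto.
  rewrite hZ, hZ by auto. auto. Qed.

Lemma lin_ext M u v j l : linT N M -> eqT N u v -> inT N j l -> M u j l = M v j l.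
Proof. intros [hA [hZ hE]] H H'. apply hE; auto. Qed.

Lemma disc0 b c : 0 <= c -> (forall t, 0 <= 2 * t * b + t * t * c) -> b = 0.
Proof. intros Hc H. set (e := / (c + 1)).
  assert (He : 0 < e) by (unfold e; apply Rinv_0_lt_compat; lra).
  assert (Hec : e * c < 1).
  { unfold e. apply Rmult_lt_reg_r with (c + 1); [lra|].
    rewrite Rmult_assoc, (Rmult_comm c), <- Rmult_assoc, Rinv_l by lra. lra. }
  specialize (H (- b * e)).
  assert (E : e * (b * b) * (e * c - 2) = 2 * (- b * e) * b + (- b * e) * (- b * e) * c) by ring.
  assert (0 <= b * b) by nra.
  assert (e * (b * b) * (e * c - 2) <= - (e * (b * b))).
  { assert (0 <= e * (b * b)) by nra. nra. }
  assert (e * (b * b) <= 0) by lra. assert (b * b <= 0) by nra. nra. Qed.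

Lemma eq_eigen M lam z : linT N M -> symT N M -> (forall x, ip x (M x) <= lam * ip x x) ->
  ip z (M z) = lam * ip z z -> eqT N (M z) (fun j l => lam * z j l).
Proof.
intros hM hS Hub Hz.
set (u := fun a b => lam * z a b + (-1) * M z a b).
assert (Hu : ip u u = lam * ip z u - ip (M z) u) by (unfold u at 1; rewrite ip_lin_l; ring).
assert (Hs : ip z (M u) = ip (M z) u) by apply hS.
assert (HQ : forall t, 0 <= 2 * t * ip u u + t * t * (lam * ip u u - ip u (M u))).
{ intros t. set (x := fun a b => 1 * z a b + t * u a b).
  pose proof (Hub x) as Hx.
  assert (E1 : ip x (M x) = ip x (fun a b => 1 * M z a b + t * M u a b)).
  { apply ip_ext; [intros ? ? ?; auto|]. intros j l H. unfold x. apply lin_comb; auto. }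
  rewrite E1, ip_lin_r in Hx. unfold x in Hx. rewrite !ip_lin_l in Hx.
  rewrite !ip_lin_r in Hx.
  rewrite (ip_sym u z), (ip_sym u (M z)), Hs, Hz in Hx. nra. }
assert (Hc : 0 <= lam * ip u u - ip u (M u)) by (pose proof (Hub u); lra).
pose proof (disc0 _ _ Hc HQ) as H0.
intros j l H. pose proof (nrm_eq0 u H0 j l H) as Hj. unfold u in Hj. lra.
Qed.

Definition coopT (M : vec -> vec) := forall x j l, (forall a b, inT N a b -> 0 <= x a b) ->
  inT N j l -> x j l = 0 -> 0 <= M x j l.

Lemma abs_sq x : Rabs x * Rabs x = x * x.
Proof. destruct (Rcase_abs x); [rewrite Rabs_left by auto | rewrite Rabs_right by auto]; ring. Qed.

Lemma nrm_abs z : ip (fun a b => Rabs (z a b)) (fun a b => Rabs (z a b)) = ip z z.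
Proof. unfold ipT; apply sumT_ext; intros; apply abs_sq. Qed.

Lemma abs_ge M z : linT N M -> symT N M -> coopT M ->
  ip z (M z) <= ip (fun a b => Rabs (z a b)) (M (fun a b => Rabs (z a b))).
Proof.
intros hM hS hC.
set (p := fun a b => Rmax (z a b) 0). set (m := fun a b => Rmax (- z a b) 0).
assert (Ez : eqT N z (fun a b => 1 * p a b + (-1) * m a b)).
{ intros a b _; unfold p, m, Rmax; destruct Rle_dec; destruct Rle_dec; lra. }
assert (Ea : eqT N (fun a b => Rabs (z a b)) (fun a b => 1 * p a b + 1 * m a b)).
{ intros a b _; unfold p, m, Rmax; destruct Rle_dec; destruct Rle_dec;
  [rewrite Rabs_left1 by lra | rewrite Rabs_left1 by lra | rewrite Rabs_right by lra | rewrite Rabs_right by lra]; lra. }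
assert (Hp : forall a b, inT N a b -> 0 <= p a b) by (intros; unfold p, Rmax; destruct Rle_dec; lra).
assert (Hm : forall a b, inT N a b -> 0 <= m a b) by (intros; unfold m, Rmax; destruct Rle_dec; lra).
assert (Hpm : 0 <= ip p (M m)).
{ unfold ipT; apply sumT_ge0; intros a b H.
  destruct (Rle_dec 0 (z a b)) as [h|h].
  - apply Rmult_le_pos; [apply Hp; auto|]. apply hC; auto.
    unfold m, Rmax; destruct Rle_dec; lra.
  - replace (p a b) with 0 by (unfold p, Rmax; destruct Rle_dec; lra). lra. }
rewrite (ip_ext z (fun a b => 1 * p a b + (-1) * m a b) (M z) (fun a b => 1 * M p a b + (-1) * M m a b)); [| exact Ez |].
2:{ intros a b H. rewrite (lin_ext M _ _ a b hM Ez H). apply lin_comb; auto. }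
rewrite (ip_ext (fun a b => Rabs (z a b)) (fun a b => 1 * p a b + 1 * m a b) (M (fun a b => Rabs (z a b))) (fun a b => 1 * M p a b + 1 * M m a b)); [| exact Ea |].
2:{ intros a b H. rewrite (lin_ext M _ _ a b hM Ea H). apply lin_comb; auto. }
rewrite !ip_lin_l, !ip_lin_r.
assert (E : ip m (M p) = ip p (M m)) by (rewrite hS; apply ip_sym).
rewrite E. lra.
Qed.

Definition irredT (M : vec -> vec) := forall w lam, (forall a b, inT N a b -> 0 <= w a b) ->
  eqT N (M w) (fun j l => lam * w j l) -> forall j l, inT N j l -> w j l = 0 ->
  forall a b, inT N a b -> w a b = 0.

Lemma ip_scal_r u v c : ip u (fun a b => c * v a b) = c * ip u v.
Proof. unfold ipT. replace (c * sumT N (fun j l => u j l * v j l)) with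
  (c * sumT N (fun j l => u j l * v j l) + 0 * sumT N (fun j l => u j l * v j l)) by ring.
  rewrite <- sumT_lin. apply sumT_ext; intros; ring. Qed.

Lemma ip_scal_l u v c : ip (fun a b => c * v a b) u = c * ip v u.
Proof. rewrite ip_sym, ip_scal_r, ip_sym. auto. Qed.

Lemma ip_eig M lam z : eqT N (M z) (fun j l => lam * z j l) -> ip z (M z) = lam * ip z z.
Proof. intros H. rewrite (ip_ext z z (M z) (fun j l => lam * z j l)) by (auto; intros ? ? ?; auto).
  apply ip_scal_r. Qed.

Lemma nrm_pos u : (exists j l, inT N j l /\ u j l <> 0) -> 0 < ip u u.
Proof. intros [j [l [H H']]]. unfold ipT. apply sumT_pos; [intros; nra|].
  exists j, l; split; auto. nra. Qed.

Lemma abs_eig M lam z : linT N M -> symT N M -> coopT M -> (forall x, ip x (M x) <= lam * ip x x) ->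
  eqT N (M z) (fun j l => lam * z j l) ->
  eqT N (M (fun a b => Rabs (z a b))) (fun j l => lam * Rabs (z j l)).
Proof.
intros hM hS hC Hub Hz. apply eq_eigen; auto.
pose proof (abs_ge M z hM hS hC). pose proof (Hub (fun a b => Rabs (z a b))).
rewrite nrm_abs in *. rewrite ip_eig with (lam := lam) in H by auto. lra.
Qed.

Lemma PF M : (0 < N)%nat -> linT N M -> symT N M -> coopT M -> irredT M ->
  exists lam W, (forall a b, inT N a b -> 0 < W a b) /\ ip W W = 1 /\
    eqT N (M W) (fun j l => lam * W j l) /\ (forall x, ip x (M x) <= lam * ip x x) /\
    (forall v, eqT N (M v) (fun j l => lam * v j l) -> exists c, eqT N v (fun j l => c * W j l)).
Proof.
intros N0 hM hS hC hI.
destruct (MAXvec N0 hM hS) as [lam [y [[j0 [l0 [H0 Hy0]]] [Hy Hub]]]].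
assert (Hy' : eqT N (M y) (fun j l => lam * y j l)) by exact Hy.
set (w := fun a b => Rabs (y a b)).
assert (Hw : eqT N (M w) (fun j l => lam * w j l)) by (apply abs_eig; auto).
assert (Hwp : forall a b, inT N a b -> 0 < w a b).
{ intros a b Hab. assert (0 <= w a b) by (unfold w; apply Rabs_pos).
  destruct (Req_dec (w a b) 0) as [e|e]; [|lra].
  exfalso. apply Hy0. assert (Hw0 : w j0 l0 = 0).
  { refine (hI w lam _ Hw a b Hab e j0 l0 H0). intros; unfold w; apply Rabs_pos. }
  unfold w in Hw0. apply Rabs_eq_0 in Hw0. exact Hw0. }
assert (Hnw : 0 < ip w w).
{ apply nrm_pos. exists j0, l0; split; auto. specialize (Hwp j0 l0 H0). lra. }
set (s := / sqrt (ip w w)).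
assert (Hs : s * s * ip w w = 1).
{ unfold s. rewrite <- Rinv_mult. rewrite sqrt_sqrt by lra. field. lra. }
assert (Hs0 : 0 < s) by (unfold s; apply Rinv_0_lt_compat, sqrt_lt_R0; lra).
set (W := fun a b => s * w a b).
assert (HW : eqT N (M W) (fun j l => lam * W j l)).
{ intros j l H. unfold W. destruct hM as [_ [hZ _]]. rewrite hZ by auto. rewrite Hw by auto. ring. }
assert (HWp : forall a b, inT N a b -> 0 < W a b) by (intros; unfold W; apply Rmult_lt_0_compat; auto).
exists lam, W. split; [auto|]. split.
{ unfold W. rewrite ip_scal_l, ip_scal_r. lra. }
split; [auto|]. split; [auto|].
intros v Hv. set (c := v j0 l0 / W j0 l0). exists c.
set (z := fun a b => 1 * v a b + (- c) * W a b).
assert (Hz : eqT N (M z) (fun j l => lam * z j l)).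
{ intros j l H. unfold z. rewrite lin_comb by auto. rewrite Hv, HW by auto. ring. }
assert (Hz0 : z j0 l0 = 0).
{ unfold z, c. specialize (HWp j0 l0 H0). field. lra. }
assert (Haz := abs_eig M lam z hM hS hC Hub Hz).
assert (Hzz : forall a b, inT N a b -> Rabs (z a b) = 0).
{ refine (hI (fun a b => Rabs (z a b)) lam _ Haz j0 l0 H0 _).
  - intros; apply Rabs_pos.
  - simpl. rewrite Hz0, Rabs_R0. auto. }
intros j l H. specialize (Hzz j l H). apply Rabs_eq_0 in Hzz. unfold z in Hzz. lra.
Qed.

Lemma ip_add_r u v w : ip u (fun a b => v a b + w a b) = ip u v + ip u w.
Proof. replace (ip u v + ip u w) with (1 * ip u v + 1 * ip u w) by ring. rewrite <- ip_lin_r.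
  apply ip_ext; intros ? ? ?; auto; ring. Qed.

Lemma gap M lam W : (0 < N)%nat -> linT N M -> symT N M -> ip W W = 1 ->
  eqT N (M W) (fun j l => lam * W j l) -> (forall x, ip x (M x) <= lam * ip x x) ->
  (forall v, eqT N (M v) (fun j l => lam * v j l) -> exists c, eqT N v (fun j l => c * W j l)) ->
  exists lam2, lam2 < lam /\ forall r, ip W r = 0 -> ip r (M r) <= lam2 * ip r r.
Proof.
intros N0 hM hS HW1 HW Hub Hsimp.
set (Mc := fun (x : vec) a b => M x a b + (- ip W x) * W a b).
assert (hMc : linT N Mc).
{ destruct hM as [hA [hZ hE]]. split; [|split].
  - intros u v j l H. unfold Mc. rewrite hA, ip_add_r by auto. ring.
  - intros c u j l H. unfold Mc. rewrite hZ, ip_scal_r by auto. ring.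
  - intros u v Huv j l H. unfold Mc. rewrite (hE u v Huv j l H).
    rewrite (ip_ext W W u v) by (auto; intros ? ? ?; auto). auto. }
assert (Hq : forall x, ip x (Mc x) = ip x (M x) - ip W x * ip W x).
{ intros x. unfold Mc. rewrite ip_add_r, ip_scal_r, (ip_sym x W). ring. }
assert (hSc : symT N Mc).
{ intros u v. unfold Mc.
  rewrite (ip_sym (fun a b => M u a b + - ip W u * W a b) v).
  rewrite !ip_add_r, !ip_scal_r.
  rewrite (ip_sym v (M u)), (hS u v), (ip_sym (M u) v), (ip_sym v W), (ip_sym u W). ring. }
destruct (MAXvec N0 hMc hSc) as [lam2 [y [[j0 [l0 [H0 Hy0]]] [Hy Hub2]]]].
exists lam2. split.
- assert (Hn : 0 < ip y y) by (apply nrm_pos; exists j0, l0; auto).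
  assert (Hey : ip y (Mc y) = lam2 * ip y y) by (apply ip_eig; exact Hy).
  rewrite Hq in Hey. pose proof (Hub y).
  assert (0 <= ip W y * ip W y) by nra.
  destruct (Rlt_le_dec lam2 lam) as [h|h]; auto. exfalso.
  assert (HW0 : ip W y * ip W y = 0) by nra.
  assert (Heq : ip y (M y) = lam * ip y y) by nra.
  pose proof (eq_eigen M lam y hM hS Hub Heq) as Hye.
  destruct (Hsimp y Hye) as [c Hc].
  assert (ip W y = c).
  { rewrite (ip_ext W W y (fun j l => c * W j l)) by (auto; intros ? ? ?; auto).
    rewrite ip_scal_r, HW1. ring. }
  assert (Hc0 : c = 0) by nra. apply Hy0. rewrite Hc by auto. rewrite Hc0. ring.
- intros r Hr. rewrite <- (Rminus_0_r (ip r (M r))).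
  replace 0 with (ip W r * ip W r) by (rewrite Hr; ring). rewrite <- Hq. apply Hub2.
Qed.
End Abs.


Lemma dlim_ext f g x l l' : (forall t, f t = g t) -> l = l' -> derivable_pt_lim f x l -> derivable_pt_lim g x l'.
Proof. intros H <- D eps Heps. destruct (D eps Heps) as [d Hd]. exists d. intros h Hh Hd'.
  rewrite <- !H. apply Hd; auto. Qed.

Lemma d_plus f g x l1 l2 : derivable_pt_lim f x l1 -> derivable_pt_lim g x l2 ->
  derivable_pt_lim (fun t => f t + g t) x (l1 + l2).
Proof. intros; apply (derivable_pt_lim_plus f g); auto. Qed.

Lemma d_mult f g x l1 l2 : derivable_pt_lim f x l1 -> derivable_pt_lim g x l2 ->
  derivable_pt_lim (fun t => f t * g t) x (l1 * g x + f x * l2).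
Proof. intros; apply (derivable_pt_lim_mult f g); auto. Qed.

Lemma d_const c x : derivable_pt_lim (fun _ => c) x 0.
Proof. apply (derivable_pt_lim_const c). Qed.

Lemma d_scal c f x l : derivable_pt_lim f x l -> derivable_pt_lim (fun t => c * f t) x (c * l).
Proof. intros; apply (derivable_pt_lim_scal f c); auto. Qed.

Lemma d_explin k x : derivable_pt_lim (fun t => exp (k * t)) x (k * exp (k * x)).
Proof.
assert (H1 : derivable_pt_lim (fun t => k * t) x k).
{ apply (dlim_ext (fun t => k * id t) _ _ (k * 1)); [intros; auto| ring|]. apply d_scal, derivable_pt_lim_id. }
pose proof (derivable_pt_lim_comp (fun t => k * t) exp x k (exp (k * x)) H1 (derivable_pt_lim_exp _)).
apply (dlim_ext _ _ _ _ _ (fun t => eq_refl) (Rmult_comm _ _) H).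
Qed.

Lemma dsumN n F D z : (forall i, (i < n)%nat -> derivable_pt_lim (F i) z (D i)) ->
  derivable_pt_lim (fun t => sumN n (fun i => F i t)) z (sumN n D).
Proof.
induction n as [|n IH]; intros H; simpl.
- apply d_const.
- apply d_plus; [apply IH; intros; apply H; lia | apply H; lia].
Qed.

Lemma dsumT N F D z : (forall j l, inT N j l -> derivable_pt_lim (fun t => F t j l) z (D j l)) ->
  derivable_pt_lim (fun t => sumT N (F t)) z (sumT N D).
Proof.
intros H; unfold sumT.
apply (dsumN N (fun l t => sumN (l + 1) (fun j => F t j l))). intros l Hl.
apply (dsumN (l + 1) (fun j t => F t j l)). intros j Hj. apply H. unfold inT; lia.
Qed.

Lemma decr f d : (forall z, derivable_pt_lim f z (d z)) -> (forall z, d z <= 0) ->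
  forall x y, x <= y -> f y <= f x.
Proof.
intros H Hd x y Hxy.
destruct (Req_dec x y) as [->|hne]; [lra|].
set (pr := fun z => exist (fun l => derivable_pt_abs f z l) (d z) (H z) : derivable_pt f z).
destruct (MVT_cor1 f x y pr) as [c [Hc _]]; [lra|].
assert (derive_pt f c (pr c) = d c) by (apply derive_pt_eq_0; apply H).
rewrite H0 in Hc. specialize (Hd c). nra.
Qed.

Lemma const_deriv f : (forall z, derivable_pt_lim f z 0) -> forall z, f z = f 0.
Proof.
intros H z.
assert (forall x y, x <= y -> f y <= f x) by (apply (decr f (fun _ => 0)); auto; intros; lra).
assert (forall x y, x <= y -> - f y <= - f x).
{ apply (decr (fun t => - f t) (fun _ => 0)); [|intros; lra].
  intros x. apply (dlim_ext (fun t => -1 * f t) _ _ (-1 * 0)); [intros; ring| ring|]. apply d_scal; auto. }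
destruct (Rle_dec 0 z); [specialize (H0 0 z r); specialize (H1 0 z r) | specialize (H0 z 0 ltac:(lra)); specialize (H1 z 0 ltac:(lra))]; lra.
Qed.

Lemma exp_tends (K e d : R) : 0 <= K -> 0 < e -> 0 < d ->
  exists Z, 0 <= Z /\ forall z, Z <= z -> K * exp (- d * z) < e.
Proof.
intros HK He Hd.
set (Z := (Rabs (ln (K + 1)) + Rabs (ln e) + 1) / d).
assert (HZ : 0 <= Z) by (unfold Z; apply Rmult_le_pos; [pose proof (Rabs_pos (ln (K+1))); pose proof (Rabs_pos (ln e)); lra | left; apply Rinv_0_lt_compat; auto]).
exists Z; split; auto. intros z Hz.
assert (Hdz : Rabs (ln (K + 1)) + Rabs (ln e) + 1 <= d * z).
{ unfold Z in Hz. apply Rmult_le_compat_l with (r := d) in Hz; [|lra].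
  replace (d * ((Rabs (ln (K + 1)) + Rabs (ln e) + 1) / d)) with (Rabs (ln (K + 1)) + Rabs (ln e) + 1) in Hz by (field; lra). auto. }
assert (H1 : (K + 1) * exp (- d * z) < e).
{ rewrite <- (exp_ln (K + 1)) by lra. rewrite <- exp_plus. rewrite <- (exp_ln e) by auto.
  apply exp_increasing. pose proof (Rle_abs (ln (K + 1))). pose proof (Rle_abs (- ln e)).
  rewrite Rabs_Ropp in H0. lra. }
pose proof (exp_pos (- d * z)). nra.
Qed.

Lemma ode_asym N M lam lam2 W : linT N M -> symT N M -> ipT N W W = 1 ->
  eqT N (M W) (fun j l => lam * W j l) -> lam2 < lam ->
  (forall r, ipT N W r = 0 -> ipT N r (M r) <= lam2 * ipT N r r) ->
  (forall a b, inT N a b -> 0 < W a b) ->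
  forall S : R -> vec,
    (forall z j l, inT N j l -> derivable_pt_lim (fun t => S t j l) z (M (S z) j l)) ->
    (forall j l, inT N j l -> 0 <= S 0 j l) ->
    (exists j l, inT N j l /\ S 0 j l <> 0) ->
    0 < sumT N (fun j l => W j l * S 0 j l) /\
    exists eps : R -> vec,
      (forall j l, inT N j l -> forall e, 0 < e -> exists Z, forall z, Z <= z -> Rabs (eps z j l) < e) /\
      (forall z j l, inT N j l ->
         S z j l = sumT N (fun j' l' => W j' l' * S 0 j' l') * W j l * exp (lam * z) * (1 + eps z j l)).
Proof.
intros hM hS HW1 HW Hlt Hgap HWp S HS HS0 [j0 [l0 [H0 Hn0]]].
set (c := sumT N (fun j l => W j l * S 0 j l)).
assert (Hc : 0 < c).
{ unfold c; apply sumT_pos.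
  - intros a b H; apply Rmult_le_pos; [left; auto| auto].
  - exists j0, l0; split; auto. apply Rmult_lt_0_compat; auto. specialize (HS0 j0 l0 H0). lra. }
split; auto.
set (g := fun t => ipT N W (S t)).
assert (Hg : forall z, derivable_pt_lim g z (lam * g z)).
{ intros z. unfold g, ipT.
  apply (dlim_ext (fun t => sumT N (fun j l => W j l * S t j l)) _ _ (sumT N (fun j l => W j l * M (S z) j l))); [intros; auto| |].
  - change (ipT N W (M (S z)) = lam * ipT N W (S z)).
    rewrite hS, (ip_ext N (M W) (fun j l => lam * W j l) (S z) (S z)) by (auto; intros ? ? ?; auto).
    apply ip_scal_l.
  - apply (dsumT N (fun t j l => W j l * S t j l)). intros j l H. apply d_scal. apply HS; auto. }
assert (Hge : forall z, g z = c * exp (lam * z)).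
{ set (h := fun t => g t * exp (- lam * t)).
  assert (Hh : forall z, derivable_pt_lim h z 0).
  { intros z. unfold h. apply (dlim_ext (fun t => g t * exp (- lam * t)) _ _ (lam * g z * exp (- lam * z) + g z * (- lam * exp (- lam * z)))); [intros; auto| ring|].
    apply (d_mult g (fun t => exp (- lam * t))); [apply Hg | apply d_explin]. }
  intros z. pose proof (const_deriv h Hh z) as E. unfold h in E.
  replace (- lam * 0) with 0 in E by ring. rewrite exp_0, Rmult_1_r in E.
  replace (g 0) with c in E by (unfold g, c, ipT; auto).
  rewrite <- E. rewrite Rmult_assoc, <- exp_plus. replace (- lam * z + lam * z) with 0 by ring.
  rewrite exp_0; ring. }
set (r := fun t j l => S t j l + (- g t) * W j l).
assert (Hr0 : forall t, ipT N W (r t) = 0).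
{ intros t. unfold r; cbv beta. rewrite ip_add_r, ip_scal_r, HW1. unfold g. ring. }
assert (HMr : forall z, eqT N (M (r z)) (fun j l => M (S z) j l + (- (lam * g z)) * W j l)).
{ intros z j l H. unfold r; cbv beta.
  rewrite (lin_ext N M _ (fun a b => 1 * S z a b + (- g z) * W a b) j l hM) by (auto; intros ? ? ?; ring).
  rewrite (lin_comb N M) by auto. rewrite HW by auto. ring. }
set (n := fun t => ipT N (r t) (r t)).
assert (Hn : forall z, derivable_pt_lim n z (2 * ipT N (r z) (M (r z)))).
{ intros z. unfold n, ipT.
  apply (dlim_ext (fun t => sumT N (fun j l => r t j l * r t j l)) _ _ (sumT N (fun j l => (M (S z) j l + (- (lam * g z)) * W j l) * r z j l + r z j l * (M (S z) j l + (- (lam * g z)) * W j l)))); [intros; auto| |].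
  - replace (sumT N (fun j l => r z j l * M (r z) j l)) with
      (sumT N (fun j l => r z j l * (M (S z) j l + (- (lam * g z)) * W j l)))
      by (apply sumT_ext; intros j l H; rewrite HMr; auto).
    replace (2 * sumT N (fun j l => r z j l * (M (S z) j l + - (lam * g z) * W j l))) with
      (1 * sumT N (fun j l => r z j l * (M (S z) j l + - (lam * g z) * W j l)) +
       1 * sumT N (fun j l => r z j l * (M (S z) j l + - (lam * g z) * W j l))) by ring.
    rewrite <- sumT_lin. apply sumT_ext; intros; ring.
  - apply (dsumT N (fun t j l => r t j l * r t j l)). intros j l H.
    assert (Drj : derivable_pt_lim (fun t => r t j l) z (M (S z) j l + (- (lam * g z)) * W j l)).
    { unfold r. apply d_plus; [apply HS; auto|].
      apply (dlim_ext (fun t => W j l * (-1 * g t)) _ _ (W j l * (-1 * (lam * g z)))); [intros; ring|ring|].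
      apply d_scal, d_scal, Hg. }
    apply (d_mult _ _ _ _ _ Drj Drj). }
assert (Hnb : forall z, 0 <= z -> n z <= n 0 * exp (2 * lam2 * z)).
{ set (F := fun t => n t * exp (- 2 * lam2 * t)).
  assert (HF : forall z, derivable_pt_lim F z ((2 * ipT N (r z) (M (r z))) * exp (- 2 * lam2 * z) + n z * (- 2 * lam2 * exp (- 2 * lam2 * z)))).
  { intros z. apply (d_mult n (fun t => exp (- 2 * lam2 * t))); [apply Hn | apply d_explin]. }
  intros z Hz. pose proof (decr F _ HF) as Hd.
  assert (Hneg : forall z, (2 * ipT N (r z) (M (r z))) * exp (- 2 * lam2 * z) + n z * (- 2 * lam2 * exp (- 2 * lam2 * z)) <= 0).
  { intros t. pose proof (Hgap (r t) (Hr0 t)). pose proof (exp_pos (- 2 * lam2 * t)). unfold n. nra. }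
  specialize (Hd Hneg 0 z Hz). unfold F in Hd.
  replace (- 2 * lam2 * 0) with 0 in Hd by ring. rewrite exp_0, Rmult_1_r in Hd.
  replace (n z) with (n z * exp (- 2 * lam2 * z) * exp (2 * lam2 * z)).
  2:{ rewrite Rmult_assoc, <- exp_plus. replace (- 2 * lam2 * z + 2 * lam2 * z) with 0 by ring. rewrite exp_0; ring. }
  apply Rmult_le_compat_r; [left; apply exp_pos| auto]. }
exists (fun z j l => r z j l / (c * W j l * exp (lam * z))). split.
- intros j l H e He.
  set (K := n 0 / ((c * W j l) * (c * W j l))).
  assert (Hcw : 0 < c * W j l) by (apply Rmult_lt_0_compat; auto).
  assert (HK : 0 <= K) by (unfold K; apply Rmult_le_pos; [apply nrm_ge0| left; apply Rinv_0_lt_compat; nra]).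
  destruct (exp_tends K (e * e) (2 * (lam - lam2)) HK ltac:(nra) ltac:(lra)) as [Z [HZ0 HZ]].
  exists Z. intros z Hz.
  set (E := exp (lam * z)).
  assert (HE : 0 < E) by apply exp_pos.
  assert (Hrn : r z j l * r z j l <= n z).
  { unfold n, ipT. apply (sumT_term N (fun a b => r z a b * r z a b)); auto. intros; nra. }
  pose proof (Hnb z ltac:(lra)) as Hnz.
  pose proof (HZ z Hz) as HKz.
  assert (Hexp : exp (2 * lam2 * z) = exp (- (2 * (lam - lam2)) * z) * (E * E)).
  { unfold E. rewrite <- !exp_plus. f_equal. ring. }
  set (q := r z j l / (c * W j l * E)).
  assert (Hq : q * (c * W j l * E) = r z j l) by (unfold q; field; nra).
  assert (Hq2 : q * q * ((c * W j l) * (c * W j l) * (E * E)) <= n 0 * exp (2 * lam2 * z)).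
  { replace (q * q * ((c * W j l) * (c * W j l) * (E * E))) with (r z j l * r z j l) by (rewrite <- Hq; ring). lra. }
  assert (Hq3 : q * q * ((c * W j l) * (c * W j l)) <= n 0 * exp (- (2 * (lam - lam2)) * z)).
  { apply Rmult_le_reg_r with (E * E); [nra|]. rewrite Hexp in Hq2.
    replace (q * q * (c * W j l * (c * W j l)) * (E * E)) with (q * q * (c * W j l * (c * W j l) * (E * E))) by ring.
    replace (n 0 * exp (- (2 * (lam - lam2)) * z) * (E * E)) with (n 0 * (exp (- (2 * (lam - lam2)) * z) * (E * E))) by ring.
    lra. }
  assert (Hq4 : q * q <= K * exp (- (2 * (lam - lam2)) * z)).
  { unfold K. apply Rmult_le_reg_r with ((c * W j l) * (c * W j l)); [nra|].
    replace (n 0 / (c * W j l * (c * W j l)) * exp (- (2 * (lam - lam2)) * z) * (c * W j l * (c * W j l))) with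
      (n 0 * exp (- (2 * (lam - lam2)) * z)) by (field; nra). lra. }
  assert (Hqe : q * q < e * e) by lra.
  rewrite <- (abs_sq q) in Hqe. fold E. fold q.
  pose proof (Rabs_pos q). nra.
- intros z j l H. fold c. pose proof (HWp j l H). pose proof (exp_pos (lam * z)).
  assert (HSz : S z j l = r z j l + g z * W j l) by (unfold r; ring).
  rewrite HSz, Hge. field. split; [|split]; lra.
Qed.


Lemma sumN_add n f g : sumN n (fun i => f i + g i) = sumN n f + sumN n g.
Proof. induction n; simpl; [ring|]. rewrite IHn; ring. Qed.

Lemma sumN_scal n f c : sumN n (fun i => c * f i) = c * sumN n f.
Proof. induction n; simpl; [ring|]. rewrite IHn; ring. Qed.

Lemma sumN_exch n m f : sumN n (fun i => sumN m (fun j => f i j)) = sumN m (fun j => sumN n (fun i => f i j)).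
Proof. induction n; simpl. { symmetry; apply sumN_0. } rewrite IHn, <- sumN_add. auto. Qed.

Lemma sum_excl1 n f a : sumN n (fun i => if Nat.eqb i a then 0 else f i) =
  sumN n f - (if Nat.ltb a n then f a else 0).
Proof. induction n; simpl; [ring|]. rewrite IHn.
  destruct (Nat.eqb_spec n a) as [->|h].
  - replace (Nat.ltb a a) with false by (symmetry; apply Nat.ltb_ge; lia).
    replace (Nat.ltb a (S a)) with true by (symmetry; apply Nat.ltb_lt; lia). ring.
  - destruct (Nat.ltb_spec a n); destruct (Nat.ltb_spec a (S n)); try lia; ring. Qed.

Lemma sum_excl1' n f a : (a < n)%nat -> sumN n (fun i => if Nat.eqb i a then 0 else f i) = sumN n f - f a.
Proof. intros H. rewrite sum_excl1. replace (Nat.ltb a n) with true by (symmetry; apply Nat.ltb_lt; auto). auto. Qed.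

Lemma sum_excl2 n f a b : (a < n)%nat -> (b < n)%nat -> a <> b ->
  sumN n (fun i => if (Nat.eqb i a || Nat.eqb i b)%bool then 0 else f i) = sumN n f - f a - f b.
Proof. intros Ha Hb Hab.
  transitivity (sumN n (fun i => if Nat.eqb i a then 0 else (if Nat.eqb i b then 0 else f i))).
  { apply sumN_ext; intros i _. destruct (Nat.eqb i a), (Nat.eqb i b); auto. }
  rewrite sum_excl1', sum_excl1' by auto.
  replace (Nat.eqb a b) with false by (symmetry; apply Nat.eqb_neq; auto). ring. Qed.

Lemma FS N f : (forall j l, (j < N)%nat -> (l < N)%nat -> f j l = f l j) ->
  sumN N (fun j => sumN N (fun l => f j l)) = 2 * sumT N f - sumN N (fun j => f j j).
Proof.
induction N as [|N IH]; intros H; unfold sumT in *; simpl; [ring|].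
assert (E1 : sumN N (fun j => sumN N (fun l => f j l) + f j N) =
  sumN N (fun j => sumN N (fun l => f j l)) + sumN N (fun j => f j N)) by apply sumN_add.
rewrite E1, IH by (intros; apply H; lia).
assert (E2 : sumN N (fun l => f N l) = sumN N (fun j => f j N)) by (apply sumN_ext; intros; apply H; lia).
rewrite E2.
assert (E3 : sumN (N + 1) (fun j => f j N) = sumN N (fun j => f j N) + f N N).
{ rewrite Nat.add_1_r. simpl. auto. }
rewrite E3. ring.
Qed.

Section Conc.
Variables (N : nat) (G : nat -> nat -> R) (Lam : nat -> R).
Hypothesis Gsym : forall j l, (j < N)%nat -> (l < N)%nat -> G j l = G l j.
Hypothesis Goff : forall j l, (j < N)%nat -> (l < N)%nat -> j <> l -> 0 <= G j l.
Hypothesis Gdiag : forall j, (j < N)%nat ->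
     G j j = - sumN N (fun l => if Nat.eqb l j then 0 else G j l).

Lemma Sget_sym S j l : Sget S j l = Sget S l j.
Proof. unfold Sget. destruct (Nat.leb_spec j l), (Nat.leb_spec l j); auto.
  assert (j = l) by lia. subst; auto. lia. Qed.

Lemma Sget_in S j l : (j <= l)%nat -> Sget S j l = S j l.
Proof. intros H; unfold Sget. destruct (Nat.leb_spec j l); auto; lia. Qed.

Lemma rowsum j : (j < N)%nat -> sumN N (fun n => G j n) = 0.
Proof. intros H. pose proof (Gdiag j H) as H0. rewrite (sum_excl1' N (fun l => G j l)) in H0 by auto. cbv beta in H0. lra. Qed.

Lemma colsum l : (l < N)%nat -> sumN N (fun n => G n l) = 0.
Proof. intros H. rewrite <- (rowsum l H). apply sumN_ext; intros; apply Gsym; auto. Qed.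

Definition ThF (V : nat -> nat -> R) j l :=
  G j l * (V j j + V l l - 2 * V j l) + sumN N (fun n => G j n * V n l) + sumN N (fun n => V j n * G n l).

Lemma Theta_formula S j l : (j < N)%nat -> (l < N)%nat -> Theta N G S j l = ThF (Sget S) j l.
Proof.
intros Hj Hl. unfold Theta, ThF. set (V := Sget S).
set (h := fun n => G l n * (V j n - V j l) + G j n * (V n l - V j l)).
assert (Hh : sumN N h = sumN N (fun n => G j n * V n l) + sumN N (fun n => V j n * G n l)).
{ unfold h. rewrite sumN_add.
  assert (E1 : sumN N (fun n => G l n * (V j n - V j l)) = sumN N (fun n => V j n * G n l)).
  { transitivity (sumN N (fun n => 1 * (V j n * G n l) + (- V j l) * G l n)).
    { apply sumN_ext; intros n Hn; rewrite (Gsym l n) by auto; ring. }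
    rewrite sumN_lin, rowsum by auto. ring. }
  assert (E2 : sumN N (fun n => G j n * (V n l - V j l)) = sumN N (fun n => G j n * V n l)).
  { transitivity (sumN N (fun n => 1 * (G j n * V n l) + (- V j l) * G j n)).
    { apply sumN_ext; intros n Hn; ring. }
    rewrite sumN_lin, rowsum by auto. ring. }
  rewrite E1, E2; ring. }
destruct (Nat.eqb_spec j l) as [<-|hne].
- transitivity (2 * G j j * 0 * (V j j + V j j - 2 * V j j) + sumN N (fun n => if Nat.eqb n j then 0 else h n)).
  { f_equal. apply sumN_ext; intros n _. unfold h. destruct (Nat.eqb n j); simpl; auto. }
  rewrite sum_excl1' by auto. rewrite Hh. unfold h. ring.
- transitivity (2 * G j l * 1 * (V j j + V l l - 2 * V j l) + sumN N (fun n => if (Nat.eqb n j || Nat.eqb n l)%bool then 0 else h n)).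
  { reflexivity. }
  rewrite sum_excl2 by auto. rewrite Hh. unfold h. rewrite (Gsym l j) by auto. ring.
Qed.

Lemma Theta_sym S j l : (j < N)%nat -> (l < N)%nat -> Theta N G S j l = Theta N G S l j.
Proof.
intros Hj Hl. rewrite !Theta_formula by auto. unfold ThF.
rewrite (Sget_sym S l j), (Gsym l j) by auto.
assert (E1 : sumN N (fun n => G j n * Sget S n l) = sumN N (fun n => Sget S l n * G n j)).
{ apply sumN_ext; intros n Hn. rewrite (Gsym j n), (Sget_sym S n l) by auto. ring. }
assert (E2 : sumN N (fun n => Sget S j n * G n l) = sumN N (fun n => G l n * Sget S n j)).
{ apply sumN_ext; intros n Hn. rewrite (Gsym l n), (Sget_sym S n j) by auto. ring. }
rewrite E1, E2. ring.
Qed.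

Lemma Sget_lin S1 S2 c d a b : Sget (fun x y => c * S1 x y + d * S2 x y) a b = c * Sget S1 a b + d * Sget S2 a b.
Proof. unfold Sget; destruct (Nat.leb a b); auto. Qed.

Lemma Theta_lin S1 S2 c d j l : (j < N)%nat -> (l < N)%nat ->
  Theta N G (fun x y => c * S1 x y + d * S2 x y) j l = c * Theta N G S1 j l + d * Theta N G S2 j l.
Proof.
intros Hj Hl. rewrite !Theta_formula by auto. unfold ThF. rewrite !Sget_lin.
assert (E1 : sumN N (fun n => G j n * Sget (fun x y => c * S1 x y + d * S2 x y) n l) =
  c * sumN N (fun n => G j n * Sget S1 n l) + d * sumN N (fun n => G j n * Sget S2 n l)).
{ rewrite <- sumN_lin. apply sumN_ext; intros. rewrite Sget_lin. ring. }
assert (E2 : sumN N (fun n => Sget (fun x y => c * S1 x y + d * S2 x y) j n * G n l) =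
  c * sumN N (fun n => Sget S1 j n * G n l) + d * sumN N (fun n => Sget S2 j n * G n l)).
{ rewrite <- sumN_lin. apply sumN_ext; intros. rewrite Sget_lin. ring. }
rewrite E1, E2. ring.
Qed.

Lemma Theta_ext S S' j l : (forall a b, (a < N)%nat -> (b < N)%nat -> Sget S a b = Sget S' a b) ->
  (j < N)%nat -> (l < N)%nat -> Theta N G S j l = Theta N G S' j l.
Proof.
intros H Hj Hl. rewrite !Theta_formula by auto. unfold ThF.
rewrite !H by auto.
assert (E1 : sumN N (fun n => G j n * Sget S n l) = sumN N (fun n => G j n * Sget S' n l))
  by (apply sumN_ext; intros; rewrite H; auto).
assert (E2 : sumN N (fun n => Sget S j n * G n l) = sumN N (fun n => Sget S' j n * G n l))
  by (apply sumN_ext; intros; rewrite H; auto).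
rewrite E1, E2. auto.
Qed.

Lemma Sget_eqT u v a b : eqT N u v -> (a < N)%nat -> (b < N)%nat -> Sget u a b = Sget v a b.
Proof. intros H Ha Hb. unfold Sget. destruct (Nat.leb_spec a b); apply H; unfold inT; lia. Qed.

Lemma lin_Aop : linT N (Aop N G Lam).
Proof.
split; [|split].
- intros u v j l [H1 H2]. unfold Aop, Psi.
  rewrite (Theta_ext _ (fun x y => 1 * u x y + 1 * v x y)) by (try lia; intros; unfold Sget; destruct (Nat.leb a b); ring).
  rewrite Theta_lin by lia. ring.
- intros c u j l [H1 H2]. unfold Aop, Psi.
  rewrite (Theta_ext _ (fun x y => c * u x y + 0 * u x y)) by (try lia; intros; unfold Sget; destruct (Nat.leb a b); ring).
  rewrite Theta_lin by lia. ring.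
- intros u v H j l [H1 H2]. unfold Aop, Psi.
  rewrite (Theta_ext u v) by (try lia; intros; apply Sget_eqT; auto).
  rewrite (H j l) by (unfold inT; lia). auto.
Qed.

Lemma sumN_5 n a b c d e k : sumN n (fun i => a i + b i + k * c i + d i + e i) =
  sumN n a + sumN n b + k * sumN n c + sumN n d + sumN n e.
Proof. rewrite !sumN_add, sumN_scal. auto. Qed.

Section Key.
Variables U V : nat -> nat -> R.
Hypothesis Us : forall a b, U a b = U b a.
Hypothesis Vs : forall a b, V a b = V b a.

Definition A1 (U V : nat -> nat -> R) := sumN N (fun j => sumN N (fun l => U j l * G j l * V j j)).
Definition A3 (U V : nat -> nat -> R) := sumN N (fun j => sumN N (fun l => U j l * G j l * V j l)).
Definition T1 (U V : nat -> nat -> R) := sumN N (fun j => sumN N (fun l => sumN N (fun n => U j l * (G j n * V n l)))).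
Definition T2 (U V : nat -> nat -> R) := sumN N (fun j => sumN N (fun l => sumN N (fun n => U j l * (V j n * G n l)))).
Definition Fu (U V : nat -> nat -> R) := sumN N (fun j => sumN N (fun l => U j l * ThF V j l)) + sumN N (fun j => U j j * ThF V j j).

Lemma Fu_dec : Fu U V = 2 * A1 U V + 2 * A1 V U - 2 * A3 U V + T1 U V + T2 U V.
Proof.
unfold Fu.
assert (Ef : sumN N (fun j => sumN N (fun l => U j l * ThF V j l)) =
  A1 U V + sumN N (fun j => sumN N (fun l => U j l * G j l * V l l)) + (-2) * A3 U V + T1 U V + T2 U V).
{ unfold A1, A3, T1, T2. rewrite <- sumN_5. apply sumN_ext; intros j Hj.
  rewrite <- sumN_5. apply sumN_ext; intros l Hl. unfold ThF.
  rewrite !sumN_scal. ring. }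
assert (EA2 : sumN N (fun j => sumN N (fun l => U j l * G j l * V l l)) = A1 U V).
{ unfold A1. rewrite sumN_exch. apply sumN_ext; intros j Hj. apply sumN_ext; intros l Hl.
  rewrite (Us l j), (Gsym l j) by auto. auto. }
assert (Ed : sumN N (fun j => U j j * ThF V j j) = 2 * A1 V U).
{ transitivity (sumN N (fun j => 2 * sumN N (fun l => V j l * G j l * U j j))).
  - apply sumN_ext; intros j Hj. unfold ThF. rewrite <- sumN_scal.
    transitivity (sumN N (fun n => U j j * (G j n * V n j)) + sumN N (fun n => U j j * (V j n * G n j))).
    { rewrite !sumN_scal. ring. }
    rewrite <- sumN_add. apply sumN_ext; intros n Hn. rewrite (Vs n j), (Gsym n j) by auto. ring.
  - unfold A1. rewrite sumN_scal. auto. }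
rewrite Ef, EA2, Ed. ring.
Qed.
End Key.

Lemma T1_sym U V : T1 U V = T1 V U.
Proof.
unfold T1.
transitivity (sumN N (fun j => sumN N (fun n => sumN N (fun l => U j l * (G j n * V n l))))).
{ apply sumN_ext; intros; apply sumN_exch. }
rewrite sumN_exch.
apply sumN_ext; intros n Hn. rewrite sumN_exch. apply sumN_ext; intros l Hl.
apply sumN_ext; intros j Hj. rewrite (Gsym j n) by auto. ring.
Qed.

Lemma T2_sym U V : T2 U V = T2 V U.
Proof.
unfold T2. apply sumN_ext; intros j Hj. rewrite sumN_exch.
apply sumN_ext; intros l Hl. apply sumN_ext; intros n Hn. rewrite (Gsym l n) by auto. ring.
Qed.

Lemma A3_sym U V : A3 U V = A3 V U.
Proof. unfold A3. apply sumN_ext; intros; apply sumN_ext; intros; ring. Qed.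

Lemma KEY U V : (forall a b, U a b = U b a) -> (forall a b, V a b = V b a) -> Fu U V = Fu V U.
Proof.
intros Us Vs. rewrite (Fu_dec U V), (Fu_dec V U) by auto.
rewrite (A3_sym U V), (T1_sym U V), (T2_sym U V). ring.
Qed.

Lemma ThF_sym S j l : (j < N)%nat -> (l < N)%nat -> ThF (Sget S) j l = ThF (Sget S) l j.
Proof. intros; rewrite <- !Theta_formula by auto. apply Theta_sym; auto. Qed.

Lemma ipTheta u v : sumT N (fun j l => u j l * Theta N G v j l) = Fu (Sget u) (Sget v) / 2.
Proof.
assert (E : sumT N (fun j l => u j l * Theta N G v j l) = sumT N (fun j l => Sget u j l * ThF (Sget v) j l)).
{ apply sumT_ext; intros j l [H1 H2]. rewrite Sget_in, Theta_formula by lia. auto. }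
rewrite E. unfold Fu.
rewrite (FS N (fun j l => Sget u j l * ThF (Sget v) j l)).
- field.
- intros j l Hj Hl. rewrite Sget_sym, ThF_sym by auto. auto.
Qed.

Lemma sym_Aop : symT N (Aop N G Lam).
Proof.
intros u v. unfold ipT, Aop, Psi.
assert (E1 : forall x y, sumT N (fun j l => x j l * (Theta N G y j l - (Lam j + Lam l) * y j l)) =
  1 * sumT N (fun j l => x j l * Theta N G y j l) + (-1) * sumT N (fun j l => (Lam j + Lam l) * (x j l * y j l))).
{ intros x y. rewrite <- sumT_lin. apply sumT_ext; intros; ring. }
rewrite E1.
assert (E2 : sumT N (fun j l => (Theta N G u j l - (Lam j + Lam l) * u j l) * v j l) =
  sumT N (fun j l => v j l * (Theta N G u j l - (Lam j + Lam l) * u j l))) by (apply sumT_ext; intros; ring).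
rewrite E2, E1, !ipTheta, (KEY (Sget u) (Sget v)) by (intros; apply Sget_sym).
assert (E3 : sumT N (fun j l => (Lam j + Lam l) * (u j l * v j l)) = sumT N (fun j l => (Lam j + Lam l) * (v j l * u j l)))
  by (apply sumT_ext; intros; ring).
rewrite E3. auto.
Qed.

Lemma sumN_eq0 n f : (forall i, (i < n)%nat -> 0 <= f i) -> sumN n f = 0 -> forall i, (i < n)%nat -> f i = 0.
Proof. intros H H0 i Hi. pose proof (sumN_term n f i H Hi). pose proof (H i Hi). lra. Qed.

Definition t0 x j l := 2 * G j l * (if Nat.eqb j l then 0 else 1) * (Sget x j j + Sget x l l).
Definition tn x j l n := if (Nat.eqb n j || Nat.eqb n l)%bool then 0 else G l n * Sget x j n + G j n * Sget x n l.

Lemma Theta_zero x j l : Sget x j l = 0 -> Theta N G x j l = t0 x j l + sumN N (tn x j l).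
Proof.
intros H. unfold Theta, t0, tn. rewrite H. f_equal; [ring|].
apply sumN_ext; intros n _. destruct (Nat.eqb n j || Nat.eqb n l)%bool; auto. ring.
Qed.

Lemma t0_ge0 x j l : (j < N)%nat -> (l < N)%nat -> (forall a b, (a < N)%nat -> (b < N)%nat -> 0 <= Sget x a b) ->
  0 <= t0 x j l.
Proof. intros Hj Hl H. unfold t0. destruct (Nat.eqb_spec j l); [lra|].
  pose proof (Goff j l Hj Hl n). pose proof (H j j Hj Hj). pose proof (H l l Hl Hl). nra. Qed.

Lemma tn_ge0 x j l n : (j < N)%nat -> (l < N)%nat -> (n < N)%nat ->
  (forall a b, (a < N)%nat -> (b < N)%nat -> 0 <= Sget x a b) -> 0 <= tn x j l n.
Proof. intros Hj Hl Hn H. unfold tn. destruct (Nat.eqb_spec n j), (Nat.eqb_spec n l); simpl; try lra.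
  pose proof (Goff l n Hl Hn ltac:(auto)). pose proof (Goff j n Hj Hn ltac:(auto)).
  pose proof (H j n Hj Hn). pose proof (H n l Hn Hl). nra. Qed.

Hypothesis Lpos : forall j, (j < N)%nat -> 0 <= Lam j.

Lemma coop_Aop : coopT N (Aop N G Lam).
Proof.
intros x j l Hx [H1 H2] H0. unfold Aop, Psi. rewrite H0, Rmult_0_r, Rminus_0_r.
assert (HS : forall a b, (a < N)%nat -> (b < N)%nat -> 0 <= Sget x a b).
{ intros a b Ha Hb; unfold Sget; destruct (Nat.leb_spec a b); apply Hx; unfold inT; lia. }
assert (Hs : Sget x j l = 0) by (rewrite Sget_in; [auto|lia]).
rewrite (Theta_zero x j l Hs).
pose proof (t0_ge0 x j l ltac:(lia) ltac:(lia) HS).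
assert (0 <= sumN N (tn x j l)) by (apply sumN_ge0; intros; apply tn_ge0; auto; lia).
lra.
Qed.

Hypothesis Girr : irreducible N G.

Section Irr.
Variables (w : vec) (lam : R).
Hypothesis Hw0 : forall a b, inT N a b -> 0 <= w a b.
Hypothesis Hweig : eqT N (Aop N G Lam w) (fun j l => lam * w j l).

Lemma Sw_ge0 a b : (a < N)%nat -> (b < N)%nat -> 0 <= Sget w a b.
Proof. intros Ha Hb; unfold Sget; destruct (Nat.leb_spec a b); apply Hw0; unfold inT; lia. Qed.

Lemma Theta_w0 j l : (j < N)%nat -> (l < N)%nat -> Sget w j l = 0 -> Theta N G w j l = 0.
Proof.
intros Hj Hl H.
assert (K : forall a b, (a <= b)%nat -> (b < N)%nat -> w a b = 0 -> Theta N G w a b = 0).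
{ intros a b Hab Hb Hz. pose proof (Hweig a b ltac:(unfold inT; lia)) as E.
  unfold Aop, Psi in E. rewrite Hz in E. lra. }
destruct (Nat.leb_spec j l).
- apply K; auto. rewrite <- H. rewrite Sget_in; auto.
- rewrite Theta_sym by auto. apply K; try lia. rewrite Sget_sym, Sget_in in H by lia. auto.
Qed.

Lemma step j l n : (j < N)%nat -> (l < N)%nat -> (n < N)%nat -> l <> n -> 0 < G l n ->
  Sget w j l = 0 -> Sget w j n = 0.
Proof.
intros Hj Hl Hn Hln HG H.
pose proof (Theta_w0 j l Hj Hl H) as E. rewrite Theta_zero in E by auto.
pose proof (t0_ge0 w j l Hj Hl Sw_ge0) as P0.
assert (P1 : 0 <= sumN N (tn w j l)) by (apply sumN_ge0; intros; apply tn_ge0; auto; apply Sw_ge0).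
assert (Z0 : t0 w j l = 0) by lra.
assert (Z1 : sumN N (tn w j l) = 0) by lra.
destruct (Nat.eqb_spec n j) as [->|hnj].
- unfold t0 in Z0. destruct (Nat.eqb_spec j l); [lia|].
  rewrite (Gsym j l) in Z0 by auto.
  pose proof (Sw_ge0 j j Hj Hj). pose proof (Sw_ge0 l l Hl Hl). nra.
- pose proof (sumN_eq0 N (tn w j l) ltac:(intros; apply tn_ge0; auto; apply Sw_ge0) Z1 n Hn) as Zn.
  unfold tn in Zn. destruct (Nat.eqb_spec n j); [lia|]. destruct (Nat.eqb_spec n l); [lia|]. simpl in Zn.
  pose proof (Goff j n Hj Hn ltac:(auto)). pose proof (Sw_ge0 j n Hj Hn). pose proof (Sw_ge0 n l Hn Hl). nra.
Qed.

Lemma prop j l l' : reach N G l l' -> (j < N)%nat -> (l < N)%nat -> Sget w j l = 0 -> Sget w j l' = 0.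
Proof.
intros R; induction R as [l|l k l'' Hl Hk Hne HG R IH]; intros Hj Hl' H; auto.
apply IH; auto. apply (step j l k); auto.
Qed.

Lemma irr_all j l : inT N j l -> w j l = 0 -> forall a b, inT N a b -> w a b = 0.
Proof.
intros [H1 H2] H a b [H3 H4].
assert (E0 : Sget w j l = 0) by (rewrite Sget_in by lia; auto).
assert (E1 : Sget w j b = 0) by (apply (prop j l b); auto; try lia; apply Girr; lia).
rewrite Sget_sym in E1.
assert (E2 : Sget w b a = 0) by (apply (prop b j a); auto; try lia; apply Girr; lia).
rewrite Sget_sym, Sget_in in E2 by lia. auto.
Qed.
End Irr.

Lemma irred_Aop : irredT N (Aop N G Lam).
Proof. intros w lam Hw He j l Hjl Hz a b Hab. apply (irr_all w lam Hw He j l Hjl Hz a b Hab). Qed.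
End Conc.


Lemma gen_eig N M lam : linT N M -> symT N M ->
  forall k v, (1 <= k)%nat -> eqT N (opow k (fun x j l => M x j l - lam * x j l) v) (fun _ _ => 0) ->
  eqT N (M v) (fun j l => lam * v j l).
Proof.
intros hM hS.
set (B := fun (x : vec) j l => M x j l - lam * x j l).
assert (symB : forall u v, ipT N u (B v) = ipT N (B u) v).
{ intros u v.
  rewrite (ip_ext N u u (B v) (fun j l => 1 * M v j l + (- lam) * v j l)) by (intros ? ? ?; unfold B; ring).
  rewrite (ip_ext N (B u) (fun j l => 1 * M u j l + (- lam) * u j l) v v) by (intros ? ? ?; unfold B; ring).
  rewrite ip_lin_r, ip_lin_l, hS, (ip_sym N u v). ring. }
assert (extB : forall x y, eqT N x y -> eqT N (B x) (B y)).
{ intros x y H j l Hjl. unfold B. rewrite (lin_ext N M x y j l hM H Hjl), H by auto. auto. }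
assert (claim : forall k v, eqT N (opow (S k) B v) (fun _ _ => 0) -> eqT N (B v) (fun _ _ => 0)).
{ induction k as [|k IH]; intros v H; simpl in H; auto.
  apply IH. simpl. set (y := opow k B v) in *.
  assert (Hn : ipT N (B y) (B y) = 0).
  { rewrite <- symB. rewrite (ip_ext N y y (B (B y)) (fun _ _ => 0)) by (auto; intros ? ? ?; auto).
    unfold ipT. transitivity (sumT N (fun _ _ => 0)); [apply sumT_ext; intros; ring | apply sumT_0]. }
  apply nrm_eq0 in Hn. exact Hn. }
intros k v Hk H. destruct k as [|k]; [lia|].
pose proof (claim k v H) as HB. intros j l Hjl. specialize (HB j l Hjl). unfold B in HB. lra.
Qed.

Lemma cplx_bound N M lam a b : (forall x, ipT N x (M x) <= lam * ipT N x x) ->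
  is_eigenvalue N M a b -> a <= lam.
Proof.
intros Hub [u [v [[j [l [Hjl Hnz]]] [Hu Hv]]]].
assert (E1 : ipT N u (M u) = a * ipT N u u + (- b) * ipT N u v).
{ rewrite (ip_ext N u u (M u) (fun j l => a * u j l + (- b) * v j l)) by (intros ? ? ?; try rewrite Hu by auto; try ring).
  apply ip_lin_r. }
assert (E2 : ipT N v (M v) = b * ipT N v u + a * ipT N v v).
{ rewrite (ip_ext N v v (M v) (fun j l => b * u j l + a * v j l)) by (intros ? ? ?; try rewrite Hv by auto; try ring).
  apply ip_lin_r. }
pose proof (Hub u). pose proof (Hub v). rewrite (ip_sym N v u) in E2.
pose proof (nrm_ge0 N u). pose proof (nrm_ge0 N v).
assert (Hp : 0 < ipT N u u + ipT N v v).
{ destruct Hnz as [h|h].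
  - assert (0 < ipT N u u) by (apply nrm_pos; exists j, l; auto). lra.
  - assert (0 < ipT N v v) by (apply nrm_pos; exists j, l; auto). lra. }
assert (a * (ipT N u u + ipT N v v) <= lam * (ipT N u u + ipT N v v)) by nra.
apply Rmult_le_reg_r with (ipT N u u + ipT N v v); auto.
Qed.

Lemma sum_delta_nat n (f : nat -> R) a : sumN n (fun j => if Nat.eqb j a then f j else 0) =
  if Nat.ltb a n then f a else 0.
Proof. induction n; simpl; auto. rewrite IHn.
  destruct (Nat.eqb_spec n a) as [->|h].
  - replace (Nat.ltb a a) with false by (symmetry; apply Nat.ltb_ge; lia).
    replace (Nat.ltb a (S a)) with true by (symmetry; apply Nat.ltb_lt; lia). ring.
  - destruct (Nat.ltb_spec a n); destruct (Nat.ltb_spec a (S n)); try lia; ring. Qed.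

Lemma qid N (W : vec) (q : nat -> R) :
  sumT N (fun j l => W j l * ((2 - kdelta j l) * q j * q l))
  = sumN N (fun j => sumN N (fun l => Sget W j l * q j * q l)).
Proof.
pose (f := fun j l => Sget W j l * q j * q l).
assert (HF := FS N f ltac:(intros; unfold f; rewrite Sget_sym; ring)).
transitivity (2 * sumT N f - sumN N (fun j => f j j)); [| rewrite <- HF; reflexivity].
assert (E : sumT N (fun j l => W j l * ((2 - kdelta j l) * q j * q l)) =
  2 * sumT N f + (-1) * sumT N (fun j l => kdelta j l * f j l)).
{ rewrite <- sumT_lin. apply sumT_ext; intros j l [H1 H2]. unfold f. rewrite Sget_in by auto. ring. }
rewrite E.
assert (E2 : sumT N (fun j l => kdelta j l * f j l) = sumN N (fun j => f j j)).
{ unfold sumT. apply sumN_ext; intros l Hl.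
  transitivity (sumN (l + 1) (fun j => if Nat.eqb j l then f j l else 0)).
  { apply sumN_ext; intros j _. unfold kdelta. destruct (Nat.eqb j l); ring. }
  rewrite sum_delta_nat. replace (Nat.ltb l (l + 1)) with true by (symmetry; apply Nat.ltb_lt; lia). auto. }
rewrite E2. ring.
Qed.

Theorem mainTheorem5 (N : nat) (G : nat -> nat -> R) (Lam : nat -> R)
  (HN : (2 <= N)%nat)
  (Gsym : forall j l, (j < N)%nat -> (l < N)%nat -> G j l = G l j)
  (Goff : forall j l, (j < N)%nat -> (l < N)%nat -> j <> l -> 0 <= G j l)
  (Gdiag : forall j, (j < N)%nat ->
     G j j = - sumN N (fun l => if Nat.eqb l j then 0 else G j l))
  (Lpos : forall j, (j < N)%nat -> 0 <= Lam j)
  (Girr : irreducible N G) :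
  exists (mu : R) (W : vec),
    (* -mu is the largest eigenvalue of Theta - Psi, simple, eigenvector W *)
    simple_eigen N (Aop N G Lam) (- mu) W /\
    (forall a b, is_eigenvalue N (Aop N G Lam) a b -> a <= - mu) /\
    (* W is a unit vector with strictly positive components *)
    sumT N (fun j l => W j l ^ 2) = 1 /\
    (forall j l, inT N j l -> 0 < W j l) /\
    (* asymptotics of S(z) = exp((Theta - Psi) z) S(0) *)
    (forall S : R -> vec,
       (forall z j l, inT N j l ->
          derivable_pt_lim (fun t => S t j l) z (Aop N G Lam (S z) j l)) ->
       (forall j l, inT N j l -> 0 <= S 0 j l) ->
       (exists j l, inT N j l /\ S 0 j l <> 0) ->
       0 < sumT N (fun j l => W j l * S 0 j l) /\
       exists eps : R -> vec,
         (forall j l, inT N j l ->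
            forall e, 0 < e -> exists Z, forall z, Z <= z -> Rabs (eps z j l) < e) /\
         (forall z j l, inT N j l ->
            S z j l = sumT N (fun j' l' => W j' l' * S 0 j' l') * W j l
                      * exp (- mu * z) * (1 + eps z j l))) /\
    (* the particular initial condition S_jl(0) = (2 - delta_jl) q_j q_l *)
    (forall q : nat -> R,
       (forall j, (j < N)%nat -> 0 <= q j) ->
       (exists j, (j < N)%nat /\ q j <> 0) ->
       sumT N (fun j l => W j l * ((2 - kdelta j l) * q j * q l))
       = sumN N (fun j => sumN N (fun l => Sget W j l * q j * q l))).
Proof.
assert (N0 : (0 < N)%nat) by lia.
assert (hM : linT N (Aop N G Lam)) by (apply lin_Aop; auto).
assert (hS : symT N (Aop N G Lam)) by (apply sym_Aop; auto).
assert (hC : coopT N (Aop N G Lam)) by (apply coop_Aop; auto).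
assert (hI : irredT N (Aop N G Lam)) by (apply irred_Aop; auto).
destruct (PF N (Aop N G Lam) N0 hM hS hC hI) as [lam [W [HWp [HW1 [HW [Hub Hsimp]]]]]].
destruct (gap N (Aop N G Lam) lam W N0 hM hS HW1 HW Hub Hsimp) as [lam2 [Hlt Hgap]].
exists (- lam), W.
split; [|split; [|split; [|split; [|split]]]].
- rewrite Ropp_involutive. split; [|split].
  + exists 0%nat, 0%nat. assert (H00 : inT N 0 0) by (unfold inT; lia).
    split; auto. specialize (HWp 0%nat 0%nat H00). lra.
  + exact HW.
  + intros v Hv. apply Hsimp. apply (gen_eig N (Aop N G Lam) lam hM hS (dimT N) v); auto.
    unfold dimT. apply Nat.div_str_pos. nia.
- intros a b He. rewrite Ropp_involutive. eapply cplx_bound; eauto.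
- rewrite <- HW1. unfold ipT. apply sumT_ext; intros; ring.
- exact HWp.
- intros S HS HS0 Hnz.
  destruct (ode_asym N (Aop N G Lam) lam lam2 W hM hS HW1 HW Hlt Hgap HWp S HS HS0 Hnz) as [Hc [eps [Heps HSz]]].
  split; auto. exists eps. split; auto. intros z j l H. rewrite HSz by auto.
  replace (- - lam * z) with (lam * z) by ring. auto.
- intros q _ _. apply qid.
Qed.
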